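(* Let $(X,\rho)$ be a complete, unbounded hyperbolic metric space (with coherent system of geodesics $\Gamma$) and let $\omega:[0,+\infty)\to[0,+\infty)$ be a continuous, concave, nonzero and nondecreasing function with $\omega(0)=0$. Endow $\mathcal{C}_\omega(X)$ with the topology of uniform convergence on bounded sets. Then there is a meagre set $\mathcal{M}\subset\mathcal{C}_\omega(X)$ such that $\omega_f=\omega$ for every $f\in\mathcal{C}_\omega(X)\setminus\mathcal{M}$.
   Context: A metric space $(X,\rho)$ is geodesic-type with a coherent system of geodesics $\Gamma$ if $\Gamma$ is a family of isometries $\gamma:[0,\rho(x,y)]\to X$ with $\gamma(0)=x$, $\gamma(\rho(x,y))=y$ such that: (1) for all $x,y\in X$ there is a unique $\gamma\in\Gamma$ from $x$ to $y$; (2) if $\gamma\in\Gamma$ goes from $x$ to $y$, then $t\mapsto\gamma(\rho(x,y)-t)$ is the element of $\Gamma$ from $y$ to $x$; (3) if $\gamma\in\Gamma$ goes from $x$ to $y$ and $0\le t_1\le t_2\le\rho(x,y)$, then $t\mapsto\gamma(t+t_1)$, $t\in[0,t_2-t_1]$, is the element of $\Gamma$ from $\gamma(t_1)$ to $\gamma(t_2)$. For $x,y\in X$, $t\in[0,1]$ write $(1-t)x\oplus ty=\gamma(t\rho(x,y))$ where $\gamma\in\Gamma$ is the geodesic from $x$ to $y$. The space is hyperbolic if $\rho((1-t)x\oplus ty,(1-t)x\oplus tz)\le t\rho(y,z)$ for all $x,y,z\in X$, $t\in[0,1]$. For a map $f:X\to X$, its modulus of continuity is $\omega_f(s)=\sup\{\rho(f(x),f(y)):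 x,y\in X,\ \rho(x,y)\le s\}$ for $s\ge0$. $\mathcal{C}_\omega(X)$ is the set of all maps $f:X\to X$ with $\omega_f\le\omega$ pointwise. The topology of uniform convergence on bounded sets on $\mathcal{C}_\omega(X)$ is given by the metric $d(f,g)=\sum_{n=1}^\infty 2^{-n}\sup_{\rho(x,x_0)\le n}\min\{1,\rho(f(x),g(x))\}$ for a fixed $x_0\in X$. *)

(* Defs.v *)
From Stdlib Require Import Reals.
From Coquelicot Require Import Coquelicot.
Open Scope R_scope.

Section Defs.
Context {X : Type}.

Definition is_metric (rho : X -> X -> R) : Prop :=
  (forall x y, 0 <= rho x y) /\
  (forall x y, rho x y = 0 <-> x = y) /\
  (forall x y, rho x y = rho y x) /\
  (forall x y z, rho x z <= rho x y + rho y z).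

Definition cauchy_seq (rho : X -> X -> R) (u : nat -> X) : Prop :=
  forall eps, 0 < eps -> exists N, forall m n, (N <= m)%nat -> (N <= n)%nat ->
    rho (u m) (u n) < eps.

Definition converges_to (rho : X -> X -> R) (u : nat -> X) (l : X) : Prop :=
  forall eps, 0 < eps -> exists N, forall n, (N <= n)%nat -> rho (u n) l < eps.

Definition complete_metric (rho : X -> X -> R) : Prop :=
  forall u, cauchy_seq rho u -> exists l, converges_to rho u l.

Definition unbounded_metric (rho : X -> X -> R) : Prop :=
  forall M, exists x y, M < rho x y.

(* Coherent system of geodesics Gamma: G x y is the unique element of Gamma
   from x to y (only its values on [0, rho x y] matter). *)
Definition coherent_geodesics (rho : X -> X -> R) (G : X -> X -> R -> X) : Prop :=
  (forall x y, G x y 0 = x /\ G x y (rho x y) = y /\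
     forall s t, 0 <= s <= rho x y -> 0 <= t <= rho x y ->
       rho (G x y s) (G x y t) = Rabs (s - t)) /\
  (forall x y t, 0 <= t <= rho x y -> G y x t = G x y (rho x y - t)) /\
  (forall x y t1 t2 t, 0 <= t1 -> t1 <= t2 -> t2 <= rho x y ->
     0 <= t <= t2 - t1 ->
     G (G x y t1) (G x y t2) t = G x y (t + t1)).

Definition gcomb (rho : X -> X -> R) (G : X -> X -> R -> X) (x y : X) (t : R) : X :=
  G x y (t * rho x y).

Definition hyperbolic (rho : X -> X -> R) (G : X -> X -> R -> X) : Prop :=
  forall x y z t, 0 <= t <= 1 ->
    rho (gcomb rho G x y t) (gcomb rho G x z t) <= t * rho y z.

Definition modulus (rho : X -> X -> R) (f : X -> X) (s : R) : Rbar :=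
  Lub_Rbar (fun r => exists x y, rho x y <= s /\ r = rho (f x) (f y)).

Definition in_Comega (rho : X -> X -> R) (om : R -> R) (f : X -> X) : Prop :=
  forall s, 0 <= s -> Rbar_le (modulus rho f s) (Finite (om s)).

Definition dist_ub (rho : X -> X -> R) (x0 : X) (f g : X -> X) : R :=
  Series (fun n : nat => / 2 ^ (S n) *
    real (Lub_Rbar (fun r => exists x, rho x x0 <= INR (S n) /\
                              r = Rmin 1 (rho (f x) (g x))))).

Definition closureC rho om x0 (A : (X -> X) -> Prop) : (X -> X) -> Prop :=
  fun f => in_Comega rho om f /\
    forall r, 0 < r -> exists g, A g /\ in_Comega rho om g /\ dist_ub rho x0 f g < r.

Definition interiorC rho om x0 (A : (X -> X) -> Prop) : (X -> X) -> Prop :=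
  fun f => in_Comega rho om f /\ A f /\
    exists r, 0 < r /\ forall g, in_Comega rho om g -> dist_ub rho x0 f g < r -> A g.

Definition nowhere_denseC rho om x0 (A : (X -> X) -> Prop) : Prop :=
  forall f, ~ interiorC rho om x0 (closureC rho om x0 A) f.

Definition meagreC rho om x0 (M : (X -> X) -> Prop) : Prop :=
  (forall f, M f -> in_Comega rho om f) /\
  exists A : nat -> (X -> X) -> Prop,
    (forall n, nowhere_denseC rho om x0 (A n)) /\
    (forall f, M f -> exists n, A n f).

End Defs.

Definition admissible_modulus (om : R -> R) : Prop :=
  (forall s, 0 <= s -> 0 <= om s) /\
  om 0 = 0 /\
  (forall s, 0 <= s -> forall eps, 0 < eps -> exists delta, 0 < delta /\
     forall t, 0 <= t -> Rabs (t - s) < delta -> Rabs (om t - om s) < eps) /\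
  (forall a b l, 0 <= a -> 0 <= b -> 0 <= l <= 1 ->
     l * om a + (1 - l) * om b <= om (l * a + (1 - l) * b)) /\
  (forall a b, 0 <= a -> a <= b -> om a <= om b) /\
  (exists s, 0 <= s /\ om s <> 0).

(* Main.v *)
Require Import Defs.
From Stdlib Require Import Reals Lra Lia Classical ZArith Cantor.
From Coquelicot Require Import Coquelicot.
Open Scope R_scope.

Section Geo.
Context {X : Type} (rho : X -> X -> R) (G : X -> X -> R -> X).
Context (Hm : is_metric rho) (Hg : coherent_geodesics rho G) (Hh : hyperbolic rho G).

Lemma rpos x y : 0 <= rho x y.
Context (om : R -> R) (Ho : admissible_modulus om).
Proof. destruct Hm as [H _]; apply H. Qed.
Lemma rsym x y : rho x y = rho y x.
Proof. destruct Hm as [_ [_ [H _]]]; apply H. Qed.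
Lemma rtri x y z : rho x z <= rho x y + rho y z.
Proof. destruct Hm as [_ [_ [_ H]]]; apply H. Qed.
Lemma rxx x : rho x x = 0.
Proof. destruct Hm as [_ [H _]]; apply H; reflexivity. Qed.

Lemma G0 a b : G a b 0 = a.
Proof. destruct Hg as [H _]; apply H. Qed.
Lemma G1 a b : G a b (rho a b) = b.
Proof. destruct Hg as [H _]; apply H. Qed.
Lemma Giso a b s t : 0 <= s <= rho a b -> 0 <= t <= rho a b ->
  rho (G a b s) (G a b t) = Rabs (s - t).
Proof. destruct Hg as [H _]; apply H. Qed.

Definition gc a b t := G a b (t * rho a b).

Lemma gc0 a b : gc a b 0 = a.
Proof. unfold gc. rewrite Rmult_0_l. apply G0. Qed.
Lemma gc1 a b : gc a b 1 = b.
Proof. unfold gc. rewrite Rmult_1_l. apply G1. Qed.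

Lemma gc_dist a b t u : 0 <= t <= 1 -> 0 <= u <= 1 ->
  rho (gc a b t) (gc a b u) = Rabs (t - u) * rho a b.
Proof.
  intros Ht Hu. unfold gc. pose proof (rpos a b).
  rewrite Giso by (split; nra).
  replace (t * rho a b - u * rho a b) with ((t - u) * rho a b) by ring.
  rewrite Rabs_mult, (Rabs_right (rho a b)) by lra. reflexivity.
Qed.

Lemma hyp a b c t : 0 <= t <= 1 -> rho (gc a b t) (gc a c t) <= t * rho b c.
Proof. intros; apply Hh; auto. Qed.

Lemma gc_conv w a b t : 0 <= t <= 1 ->
  rho w (gc a b t) <= (1 - t) * rho w a + t * rho w b.
Proof.
  intros Ht.
  eapply Rle_trans. apply (rtri w (gc a w t)).
  assert (E : rho w (gc a w t) = (1 - t) * rho w a).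
  { rewrite <- (gc1 a w) at 1. rewrite gc_dist by lra.
    rewrite Rabs_right by lra. rewrite rsym. reflexivity. }
  rewrite E. rewrite (rsym (gc a w t)).
  pose proof (hyp a b w t Ht). rewrite (rsym b w) in H. lra.
Qed.

Lemma gc_mix a b c t u : 0 <= t <= 1 -> 0 <= u <= 1 ->
  rho (gc a b t) (gc a c u) <= Rabs (t - u) * rho a b + u * rho b c.
Proof.
  intros Ht Hu.
  eapply Rle_trans. apply (rtri _ (gc a b u)).
  rewrite gc_dist by auto. pose proof (hyp a b c u Hu). lra.
Qed.

Lemma G_conv w a b t : 0 <= t <= rho a b ->
  rho w (G a b t) <= Rmax (rho w a) (rho w b).
Proof.
  intros Ht. destruct (Req_dec (rho a b) 0) as [E|E].
  - replace t with 0 by lra. rewrite G0. apply Rmax_l.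
  - pose proof (rpos a b).
    replace (G a b t) with (gc a b (t / rho a b)).
    2:{ unfold gc. f_equal. field. auto. }
    assert (0 <= t / rho a b <= 1).
    { split. apply Rdiv_le_0_compat; lra.
      apply (Rmult_le_reg_r (rho a b)); [lra|]. field_simplify; lra. }
    eapply Rle_trans. apply gc_conv; auto.
    pose proof (Rmax_l (rho w a) (rho w b)). pose proof (Rmax_r (rho w a) (rho w b)).
    nra.
Qed.

Lemma gc_range a b t : 0 <= t <= 1 -> rho a (gc a b t) = t * rho a b.
Proof.
  intros. rewrite <- (gc0 a b) at 1. rewrite gc_dist by lra.
  rewrite Rabs_left1 by lra. ring.
Qed.


Lemma om_nn s : 0 <= s -> 0 <= om s.
Proof. destruct Ho as [H _]; apply H. Qed.
Lemma om0 : om 0 = 0.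
Proof. destruct Ho as [_ [H _]]; apply H. Qed.
Lemma om_mono a b : 0 <= a -> a <= b -> om a <= om b.
Proof. destruct Ho as [_ [_ [_ [_ [H _]]]]]; apply H. Qed.
Lemma om_conc a b l : 0 <= a -> 0 <= b -> 0 <= l <= 1 ->
  l * om a + (1 - l) * om b <= om (l * a + (1 - l) * b).
Proof. destruct Ho as [_ [_ [_ [H _]]]]; apply H. Qed.

Lemma om_ratio a d : 0 <= a -> 0 <= d -> d * om a <= (a + d) * om d.
Proof.
  intros Ha Hd. destruct (Rle_lt_dec a d) as [H|H].
  - pose proof (om_mono a d Ha H). pose proof (om_nn a Ha). nra.
  - assert (C := om_conc a 0 (d / a) Ha (Rle_refl 0)).
    assert (0 <= d / a <= 1).
    { split. apply Rdiv_le_0_compat; lra.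
      apply (Rmult_le_reg_r a); [lra|]. field_simplify; lra. }
    specialize (C H0). rewrite om0 in C.
    replace (d / a * a + (1 - d / a) * 0) with d in C by (field; lra).
    assert (d * om a <= a * om d).
    { apply (Rmult_le_reg_r (/ a)). apply Rinv_0_lt_compat; lra.
      replace (d * om a * / a) with (d / a * om a) by (field; lra).
      replace (a * om d * / a) with (om d) by (field; lra). lra. }
    pose proof (om_nn d Hd). nra.
Qed.

Lemma om_sub u v : 0 <= u -> 0 <= v -> om (u + v) <= om u + om v.
Proof.
  intros Hu Hv. destruct (Req_dec (u + v) 0) as [E|E].
  - assert (u = 0) by lra. assert (v = 0) by lra. subst. rewrite Rplus_0_r, om0. lra.
  - pose proof (om_ratio u v Hu Hv). pose proof (om_ratio v u Hv Hu).
    pose proof (om_nn (u+v)).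
    assert (C1 := om_conc (u+v) 0 (u/(u+v)) ltac:(lra) (Rle_refl 0)).
    assert (C2 := om_conc (u+v) 0 (v/(u+v)) ltac:(lra) (Rle_refl 0)).
    assert (0 <= u/(u+v) <= 1).
    { split. apply Rdiv_le_0_compat; lra.
      apply (Rmult_le_reg_r (u+v)); [lra|]. field_simplify; lra. }
    assert (0 <= v/(u+v) <= 1).
    { split. apply Rdiv_le_0_compat; lra.
      apply (Rmult_le_reg_r (u+v)); [lra|]. field_simplify; lra. }
    specialize (C1 H2). specialize (C2 H3). rewrite om0 in C1, C2.
    replace (u / (u + v) * (u + v) + (1 - u / (u + v)) * 0) with u in C1 by (field; lra).
    replace (v / (u + v) * (u + v) + (1 - v / (u + v)) * 0) with v in C2 by (field; lra).
    assert (u / (u+v) + v/(u+v) = 1) by (field; lra). nra.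
Qed.

Lemma om_lip u v : 0 <= u -> 0 <= v -> Rabs (om u - om v) <= om (Rabs (u - v)).
Proof.
  intros Hu Hv. destruct (Rle_dec u v) as [H|H].
  - rewrite Rabs_left1 by (pose proof (om_mono u v Hu H); lra).
    rewrite Rabs_left1 by lra.
    pose proof (om_sub u (v - u) Hu ltac:(lra)). replace (u + (v - u)) with v in H0 by ring.
    replace (- (u - v)) with (v - u) by ring. lra.
  - rewrite Rabs_right by (pose proof (om_mono v u Hv ltac:(lra)); lra).
    rewrite Rabs_right by lra.
    pose proof (om_sub v (u - v) Hv ltac:(lra)). replace (v + (u - v)) with u in H0 by ring.
    lra.
Qed.


Definition modc (f : X -> X) := forall x y, rho (f x) (f y) <= om (rho x y).
Definition lam K r := Rmin 1 (r / K).

Lemma lam_range K r : 0 < K -> 0 <= r -> 0 <= lam K r <= 1.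
Proof.
  intros. unfold lam. split.
  - apply Rmin_glb; [lra|]. apply Rdiv_le_0_compat; lra.
  - apply Rmin_l.
Qed.

Lemma lam_mono K r s : 0 < K -> r <= s -> lam K r <= lam K s.
Proof.
  intros. unfold lam. apply Rle_min_compat_l.
  apply Rmult_le_compat_r; [|lra]. left; apply Rinv_0_lt_compat; lra.
Qed.

Lemma lam_key K rx ry : 0 < K -> 0 <= rx <= ry ->
  (lam K ry - lam K rx) * om rx <= lam K ry * om (ry - rx).
Proof.
  intros HK [H1 H2]. unfold lam.
  pose proof (om_nn rx H1). pose proof (om_nn (ry - rx) ltac:(lra)).
  destruct (Rle_dec ry K) as [Hy|Hy].
  - rewrite (Rmin_right 1 (ry/K)).
    2:{ apply (Rmult_le_reg_r K); [lra|]. field_simplify; lra. }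
    rewrite (Rmin_right 1 (rx/K)).
    2:{ apply (Rmult_le_reg_r K); [lra|]. field_simplify; lra. }
    pose proof (om_ratio rx (ry - rx) H1 ltac:(lra)).
    replace (rx + (ry - rx)) with ry in H3 by ring.
    apply (Rmult_le_reg_r K); [lra|].
    replace ((ry / K - rx / K) * om rx * K) with ((ry - rx) * om rx) by (field; lra).
    replace (ry / K * om (ry - rx) * K) with (ry * om (ry - rx)) by (field; lra).
    lra.
  - rewrite (Rmin_left 1 (ry/K)).
    2:{ apply (Rmult_le_reg_r K); [lra|]. field_simplify; lra. }
    destruct (Rle_dec rx K) as [Hx|Hx].
    + rewrite (Rmin_right 1 (rx/K)).
      2:{ apply (Rmult_le_reg_r K); [lra|]. field_simplify; lra. }
      pose proof (om_ratio rx (K - rx) H1 ltac:(lra)).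
      replace (rx + (K - rx)) with K in H3 by ring.
      pose proof (om_mono (K - rx) (ry - rx) ltac:(lra) ltac:(lra)).
      assert ((1 - rx / K) * om rx <= om (K - rx)).
      { apply (Rmult_le_reg_r K); [lra|].
        replace ((1 - rx / K) * om rx * K) with ((K - rx) * om rx) by (field; lra).
        lra. }
      lra.
    + rewrite (Rmin_left 1 (rx/K)).
      2:{ apply (Rmult_le_reg_r K); [lra|]. field_simplify; lra. }
      lra.
Qed.

Definition g1 (F : X -> X) x2 K x := gc (F x2) (F x) (1 - lam K (rho x x2)).

Lemma g1_mod_aux F x2 K x y : modc F -> 0 < K -> rho x x2 <= rho y x2 ->
  rho (g1 F x2 K x) (g1 F x2 K y) <= om (rho x y).
Proof.
  intros HF HK Hxy. unfold g1.
  pose proof (lam_range K (rho x x2) HK (rpos _ _)).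
  pose proof (lam_range K (rho y x2) HK (rpos _ _)).
  pose proof (lam_mono K _ _ HK Hxy).
  eapply Rle_trans. apply gc_mix; lra.
  replace (Rabs (1 - lam K (rho x x2) - (1 - lam K (rho y x2))))
    with (lam K (rho y x2) - lam K (rho x x2)).
  2:{ rewrite Rabs_right by lra. ring. }
  pose proof (HF x2 x) as A1. pose proof (HF x y) as A2.
  pose proof (lam_key K (rho x x2) (rho y x2) HK (conj (rpos _ _) Hxy)).
  assert (Hd : rho y x2 - rho x x2 <= rho x y).
  { pose proof (rtri y x x2). rewrite (rsym y x) in H3. lra. }
  pose proof (om_mono (rho y x2 - rho x x2) (rho x y) ltac:(lra) Hd).
  pose proof (om_nn (rho x y) (rpos _ _)).
  pose proof (rpos (F x2) (F x)). pose proof (rpos (F x) (F y)).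
  rewrite (rsym x2 x) in A1.
  pose proof (om_nn (rho x x2) (rpos _ _)).
  assert ((lam K (rho y x2) - lam K (rho x x2)) * rho (F x2) (F x)
          <= (lam K (rho y x2) - lam K (rho x x2)) * om (rho x x2)).
  { apply Rmult_le_compat_l; lra. }
  assert ((1 - lam K (rho y x2)) * rho (F x) (F y) <= (1 - lam K (rho y x2)) * om (rho x y)).
  { apply Rmult_le_compat_l; lra. }
  assert (lam K (rho y x2) * om (rho y x2 - rho x x2) <= lam K (rho y x2) * om (rho x y)).
  { apply Rmult_le_compat_l; lra. }
  lra.
Qed.

Lemma g1_mod F x2 K : modc F -> 0 < K -> modc (g1 F x2 K).
Proof.
  intros HF HK x y. destruct (Rle_dec (rho x x2) (rho y x2)).
  - apply g1_mod_aux; auto.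
  - rewrite (rsym (g1 F x2 K x)), (rsym x). apply g1_mod_aux; auto; lra.
Qed.

Lemma g1_far F x2 K x : 0 < K -> K <= rho x x2 -> g1 F x2 K x = F x2.
Proof.
  intros. unfold g1, lam. rewrite Rmin_left.
  2:{ apply (Rmult_le_reg_r K); [lra|]. field_simplify; lra. }
  replace (1 - 1) with 0 by ring. apply gc0.
Qed.

Lemma g1_close F x2 K x : 0 < K ->
  rho (F x) (g1 F x2 K x) = lam K (rho x x2) * rho (F x2) (F x).
Proof.
  intros HK. unfold g1. pose proof (lam_range K (rho x x2) HK (rpos _ _)).
  rewrite <- (gc1 (F x2) (F x)) at 1. rewrite gc_dist by lra.
  rewrite Rabs_right by lra. f_equal. ring.
Qed.

Definition phi A z y := Rmax 0 (A - om (rho y z)).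
Definition psi a b A z y := G a b (phi A z y).

Lemma phi_range A z y : 0 <= A -> 0 <= phi A z y <= A.
Proof.
  intros. unfold phi. pose proof (om_nn (rho y z) (rpos _ _)).
  split. apply Rmax_l. apply Rmax_lub; lra.
Qed.

Lemma psi_mod a b A z : 0 <= A <= rho a b ->
  forall x y, rho (psi a b A z x) (psi a b A z y) <= om (rho x y).
Proof.
  intros HA x y. unfold psi.
  pose proof (phi_range A z x ltac:(lra)). pose proof (phi_range A z y ltac:(lra)).
  rewrite Giso by lra.
  eapply Rle_trans with (Rabs (om (rho x z) - om (rho y z))).
  { unfold phi. unfold Rmax. repeat destruct Rle_dec;
    unfold Rabs; repeat destruct Rcase_abs; lra. }
  eapply Rle_trans. apply om_lip; apply rpos.
  apply om_mono. apply Rabs_pos.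
  pose proof (rtri x y z). pose proof (rtri y x z). rewrite (rsym y x) in H2.
  unfold Rabs; destruct Rcase_abs; lra.
Qed.

Lemma phi_zero A z v q : A <= om q -> 0 <= q -> q <= rho v z -> phi A z v = 0.
Proof.
  intros. unfold phi. pose proof (om_mono q (rho v z) H0 H1).
  apply Rmax_left. lra.
Qed.

Lemma core F x0 x2 a b A q c :
  modc F -> a = F x2 -> 0 <= A <= rho a b -> A <= om q -> c < A -> 0 < q ->
  (forall K, 0 < K -> exists Q L, 0 <= L /\ Q <= om L /\
     forall x, rho x x2 < K -> forall t, 0 <= t <= A -> rho (g1 F x2 K x) (G a b t) <= Q) ->
  (forall p M, exists z, M <= rho p z) ->
  forall R0 d1, 0 <= R0 -> 0 < d1 ->
  exists g, modc g /\ (forall x, rho x x0 <= R0 -> rho (F x) (g x) <= d1) /\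
    exists z y, rho z y <= q /\ c < rho (g z) (g y).
Proof.
  intros HF Ha HA HAq HcA Hq HQ far R0 d1 HR0 Hd1.
  set (d2 := rho x0 x2).
  assert (Hd2 : 0 <= d2) by apply rpos.
  set (Om := om (R0 + d2)).
  assert (HOm : 0 <= Om) by (apply om_nn; lra).
  set (K := (R0 + d2) * Om / d1 + 1).
  assert (HK : 0 < K).
  { unfold K. assert (0 <= (R0 + d2) * Om / d1).
    { apply Rdiv_le_0_compat; [apply Rmult_le_pos|]; lra. } lra. }
  destruct (HQ K HK) as [Q [L [HL [HQL HQb]]]].
  destruct (far x2 (K + q + L + R0 + d2)) as [z Hz].
  destruct (far z q) as [p Hp].
  set (y := G z p q).
  assert (Hzy : rho z y = q).
  { unfold y. rewrite <- (G0 z p) at 1. rewrite Giso by lra.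
    rewrite Rabs_left1 by lra. ring. }
  set (g := fun w => if Rlt_dec (rho w z) q then psi a b A z w else g1 F x2 K w).
  assert (cross : forall u v, rho u z < q -> ~ rho v z < q ->
            rho (psi a b A z u) (g1 F x2 K v) <= om (rho u v)).
  { intros u v Hu Hv.
    destruct (Rle_dec K (rho v x2)) as [Hf|Hf].
    - rewrite g1_far by auto. rewrite <- Ha.
      assert (E : psi a b A z v = a).
      { unfold psi. rewrite phi_zero with (q := q) by lra. apply G0. }
      pose proof (psi_mod a b A z HA u v) as P. rewrite E in P. exact P.
    - rewrite rsym. unfold psi.
      eapply Rle_trans. apply HQb. lra. apply phi_range; lra.
      eapply Rle_trans. apply HQL. apply om_mono; auto.
      pose proof (rtri x2 v z). pose proof (rtri v u z).
      rewrite (rsym x2 v) in H. rewrite (rsym v u) in H0. lra. }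
  exists g. split; [|split].
  - intros u v. unfold g.
    destruct (Rlt_dec (rho u z) q) as [Hu|Hu]; destruct (Rlt_dec (rho v z) q) as [Hv|Hv].
    + apply psi_mod; auto.
    + apply cross; auto.
    + rewrite rsym, (rsym u). apply cross; auto.
    + apply g1_mod; auto.
  - intros x Hx. unfold g.
    assert (Hxz : q <= rho x z).
    { pose proof (rtri x2 x0 x). pose proof (rtri x2 x z).
      rewrite (rsym x2 x0) in H. fold d2 in H. rewrite (rsym x0 x) in H.
      pose proof (rpos x2 z). lra. }
    destruct (Rlt_dec (rho x z) q) as [Hc|_]; [lra|].
    rewrite g1_close by auto.
    pose proof (lam_range K (rho x x2) HK (rpos _ _)).
    assert (Hxx2 : rho x x2 <= R0 + d2) by (pose proof (rtri x x0 x2); fold d2 in H0; lra).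
    assert (Hl : lam K (rho x x2) <= (R0 + d2) / K).
    { unfold lam. eapply Rle_trans. apply Rmin_r.
      apply Rmult_le_compat_r; [left; apply Rinv_0_lt_compat; lra | lra]. }
    assert (HF2 : rho (F x2) (F x) <= Om).
    { eapply Rle_trans. apply HF. unfold Om. apply om_mono. apply rpos.
      rewrite rsym; lra. }
    eapply Rle_trans. apply Rmult_le_compat; try apply Hl; try apply HF2; try lra; apply rpos.
    apply (Rmult_le_reg_r K); [lra|].
    replace ((R0 + d2) / K * Om * K) with ((R0 + d2) * Om) by (field; lra).
    unfold K. replace (d1 * ((R0 + d2) * Om / d1 + 1)) with ((R0 + d2) * Om + d1) by (field; lra).
    lra.
  - exists z, y. split; [lra|]. unfold g.
    rewrite rxx. destruct (Rlt_dec 0 q) as [_|]; [|lra].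
    rewrite (rsym y z), Hzy. destruct (Rlt_dec q q) as [|_]; [lra|].
    rewrite g1_far by (pose proof (rtri x2 y z); rewrite (rsym x2 y) in H;
       rewrite (rsym y z), Hzy in H; lra).
    rewrite <- Ha. unfold psi, phi. rewrite rxx, om0.
    rewrite Rmax_right by lra. replace (A - 0) with A by ring.
    rewrite <- (G0 a b) at 2. rewrite Giso by lra. rewrite Rabs_right; lra.
Qed.

Lemma nat_above r : 0 <= r -> exists n : nat, r < INR n <= r + 1.
Proof.
  intros Hr. destruct (archimed r) as [H1 H2].
  assert (Hz : (0 <= up r)%Z).
  { apply le_IZR. lra. }
  exists (Z.to_nat (up r)). rewrite INR_IZR_INZ, Z2Nat.id by auto. lra.
Qed.

Lemma disc_step (P : nat -> Prop) M : P 0%nat -> ~ P M ->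
  exists k, (k < M)%nat /\ P k /\ ~ P (S k).
Proof.
  intros H0. induction M as [|M IH]; intros HM.
  - contradiction.
  - destruct (classic (P M)) as [HPM|HPM].
    + exists M. split; auto.
    + destruct (IH HPM) as [k [Hk1 Hk2]]. exists k. split; auto.
Qed.

Lemma far_pt (unb : unbounded_metric rho) p M : exists z, M <= rho p z.
Proof.
  destruct (unb (2 * Rabs M)) as [x [y Hxy]].
  pose proof (rtri x p y). pose proof (Rle_abs M).
  destruct (Rle_dec (Rabs M) (rho p y)).
  - exists y. lra.
  - exists x. rewrite rsym. lra.
Qed.

Lemma modc_in f : modc f -> forall x y, rho (f x) (f y) <= om (rho x y).
Proof. auto. Qed.

Lemma density (unb : unbounded_metric rho) f x0 : modc f ->
  forall q c R0 d0, 0 <= q -> 0 <= c -> c < om q -> 0 <= R0 -> 0 < d0 ->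
  exists g, modc g /\ (forall x, rho x x0 <= R0 -> rho (f x) (g x) <= d0) /\
    exists z y, rho z y <= q /\ c < rho (g z) (g y).
Proof.
  intros Hf q c R0 d0 Hq0 Hc0 Hcq HR0 Hd0.
  assert (Hq : 0 < q).
  { destruct Hq0 as [H|H]; auto. subst. rewrite om0 in Hcq. lra. }
  pose proof (far_pt unb) as far.
  destruct (classic (exists B, forall t, 0 <= t -> om t <= B)) as [[B HB]|HU].
  -
    set (E := fun v => exists t, 0 <= t /\ v = om t).
    assert (bE : bound E).
    { exists B. intros v [t [Ht ->]]. auto. }
    assert (nE : exists v, E v) by (exists (om 0); exists 0; split; [lra|auto]).
    destruct (completeness E bE nE) as [Ws [Wub Wlub]].
    assert (Hub : forall t, 0 <= t -> om t <= Ws).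
    { intros t Ht. apply Wub. exists t; auto. }
    assert (Hlub : forall W', W' < Ws -> exists t, 0 <= t /\ W' < om t).
    { intros W' HW'. apply NNPP. intros Hn.
      assert (is_upper_bound E W').
      { intros v [t [Ht ->]]. apply Rnot_lt_le. intros Hlt. apply Hn. exists t; auto. }
      specialize (Wlub W' H). lra. }
    assert (HWq : om q <= Ws) by (apply Hub; lra).
    set (th := Rmin ((Ws - c)/2) (d0/2)).
    assert (Hth : 0 < th) by (unfold th; apply Rmin_glb_lt; lra).
    assert (Hth1 : th <= (Ws - c)/2) by apply Rmin_l.
    assert (Hth2 : th <= d0/2) by apply Rmin_r.
    assert (HWs : 0 < Ws) by lra.
    set (eps := th / Ws).
    assert (Heps : eps * Ws = th) by (unfold eps; field; lra).
    assert (Heps0 : 0 <= eps) by (unfold eps; apply Rdiv_le_0_compat; lra).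
    assert (Heps1 : eps <= 1).
    { apply (Rmult_le_reg_r Ws); [lra|]. lra. }
    set (W' := Ws - th).
    assert (HcW : c < W') by (unfold W'; lra).
    set (a0 := f x0).
    set (F := fun x => gc a0 (f x) (1 - eps)).
    assert (HFb : forall x y, rho (F x) (F y) <= (1 - eps) * om (rho x y)).
    { intros x y. unfold F. eapply Rle_trans. apply hyp; lra.
      apply Rmult_le_compat_l; [lra|]. apply Hf. }
    assert (HFW : forall x y, rho (F x) (F y) <= W').
    { intros x y. eapply Rle_trans. apply HFb.
      pose proof (Hub (rho x y) (rpos _ _)).
      apply Rle_trans with ((1 - eps) * Ws). apply Rmult_le_compat_l; lra.
      unfold W'. lra. }
    assert (HF : modc F).
    { intros x y. eapply Rle_trans. apply HFb. pose proof (om_nn (rho x y) (rpos _ _)). nra. }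
    assert (HfF : forall x, rho (f x) (F x) <= d0 / 2).
    { intros x. unfold F. rewrite <- (gc1 a0 (f x)) at 1. rewrite gc_dist by lra.
      replace (1 - (1 - eps)) with eps by ring. rewrite Rabs_right by lra.
      unfold a0. pose proof (Hf x0 x). pose proof (Hub (rho x0 x) (rpos _ _)).
      apply Rle_trans with (eps * Ws); [|lra].
      apply Rmult_le_compat_l; lra. }
    (* discrete IVT *)
    set (a1 := F x0).
    set (dl := (W' - c) / 2).
    assert (Hdl : 0 < dl) by (unfold dl; lra).
    destruct (far a1 (W' + dl)) as [p Hp].
    destruct (nat_above (W' / dl)) as [M [HM1 HM2]].
    { apply Rdiv_le_0_compat; lra. }
    assert (HMd1 : W' < INR M * dl).
    { apply (Rmult_lt_compat_r dl) in HM1; auto.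
      replace (W' / dl * dl) with W' in HM1 by (field; lra). lra. }
    assert (HMd2 : INR M * dl <= W' + dl).
    { apply (Rmult_le_compat_r dl) in HM2; [|lra].
      replace ((W' / dl + 1) * dl) with (W' + dl) in HM2 by (field; lra). lra. }
    set (u := fun k : nat => G a1 p (INR k * dl)).
    set (P := fun k : nat => forall x, rho (F x) (u k) <= W').
    assert (P0 : P 0%nat).
    { intros x. unfold u. simpl. rewrite Rmult_0_l, G0. apply HFW. }
    assert (PM : ~ P M).
    { intros HPM. specialize (HPM x0). unfold u in HPM. fold a1 in HPM.
      rewrite <- (G0 a1 p) in HPM at 1. rewrite Giso in HPM.
      - rewrite Rabs_left1 in HPM; [lra|]. pose proof (pos_INR M). nra.
      - pose proof (rpos a1 p). lra.
      - pose proof (pos_INR M). split; [nra|lra]. }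
    destruct (disc_step P M P0 PM) as [k [Hk [Pk nPk]]].
    apply not_all_ex_not in nPk. destruct nPk as [x2 Hx2].
    apply Rnot_le_lt in Hx2.
    assert (HSk : INR (S k) * dl <= INR M * dl).
    { apply Rmult_le_compat_r; [lra|]. apply le_INR. auto. }
    assert (Huk : rho (u k) (u (S k)) = dl).
    { unfold u. rewrite S_INR in *. pose proof (pos_INR k).
      rewrite Giso.
      - rewrite Rabs_left1; [ring|nra].
      - split; [nra|]. lra.
      - split; [nra|]. lra. }
    set (a := F x2). set (b := u k).
    assert (Hab : c < rho a b).
    { pose proof (rtri (F x2) (u k) (u (S k))). unfold a, b. unfold dl in *. lra. }
    set (A := Rmin (om q) (rho a b)).
    assert (HA : 0 <= A <= rho a b).
    { split. apply Rmin_glb; [apply om_nn; lra| apply rpos]. apply Rmin_r. }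
    assert (HAq : A <= om q) by apply Rmin_l.
    assert (HcA : c < A) by (apply Rmin_glb_lt; lra).
    destruct (core F x0 x2 a b A q c HF eq_refl HA HAq HcA Hq) with (R0 := R0) (d1 := d0 / 2)
      as [g [Hg1 [Hg2 Hg3]]]; auto; try lra.
    + intros K HK. destruct (Hlub W') as [L [HL HLW]]. unfold W'; lra.
      exists W', L. split; auto. split; [lra|].
      intros x _ t Ht. unfold g1. fold a.
      pose proof (lam_range K (rho x x2) HK (rpos _ _)) as Hlam.
      eapply Rle_trans. apply G_conv. lra.
      apply Rmax_lub.
      * rewrite rsym, gc_range by lra.
        pose proof (HFW x2 x). pose proof (rpos a (F x)). fold a in H. nra.
      * rewrite rsym. eapply Rle_trans. apply gc_conv. lra.
        pose proof (Pk x2). pose proof (Pk x). fold a b in H. fold b in H0. rewrite (rsym b a).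
        rewrite (rsym b (F x)). nra.
    + exists g. split; auto. split; auto.
      intros x Hx. eapply Rle_trans. apply (rtri _ (F x)).
      pose proof (HfF x). pose proof (Hg2 x Hx). lra.
  -
    assert (HU' : forall B, exists t, 0 <= t /\ B < om t).
    { intros B. apply NNPP. intros Hn. apply HU. exists B. intros t Ht.
      apply Rnot_lt_le. intros Hlt. apply Hn. exists t; auto. }
    set (a := f x0).
    destruct (far a (om q)) as [p Hp].
    assert (HA : 0 <= om q <= rho a p) by (split; [apply om_nn|]; lra).
    destruct (core f x0 x0 a p (om q) q c Hf eq_refl HA (Rle_refl _) Hcq Hq) with (R0 := R0) (d1 := d0)
      as [g [Hg1 [Hg2 Hg3]]]; auto.
    + intros K HK. destruct (HU' (om K + om q)) as [L [HL HLQ]].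
      exists (om K + om q), L. split; auto. split; [lra|].
      intros x Hx t Ht. unfold g1. fold a.
      pose proof (lam_range K (rho x x0) HK (rpos _ _)) as Hlam.
      eapply Rle_trans. apply (rtri _ a).
      rewrite rsym, gc_range by lra.
      rewrite <- (G0 a p) at 2. rewrite Giso by lra. rewrite Rabs_left1 by lra.
      pose proof (Hf x0 x). fold a in H. pose proof (rpos a (f x)).
      pose proof (om_mono (rho x0 x) K (rpos _ _) ltac:(rewrite rsym; lra)).
      nra.
    + exists g. auto.
Qed.

Section Dist.
Context (x0 : X).

Lemma pow_le_1 x n : 0 <= x <= 1 -> x ^ n <= 1.
Proof. intros. rewrite <- (pow1 n). apply pow_incr. lra. Qed.

Definition Tm (f g : X -> X) n := real (Lub_Rbar (fun r => exists x, rho x x0 <= INR (S n) /\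
                              r = Rmin 1 (rho (f x) (g x)))).

Lemma Tm_props f g n :
  (0 <= Tm f g n <= 1) /\
  (forall x, rho x x0 <= INR (S n) -> Rmin 1 (rho (f x) (g x)) <= Tm f g n) /\
  (forall be, 0 <= be -> (forall x, rho x x0 <= INR (S n) -> Rmin 1 (rho (f x) (g x)) <= be) ->
     Tm f g n <= be).
Proof.
  unfold Tm.
  set (E := fun r => exists x, rho x x0 <= INR (S n) /\ r = Rmin 1 (rho (f x) (g x))).
  assert (C := Lub_Rbar_correct E). destruct C as [Hub Hlub].
  assert (E0 : E (Rmin 1 (rho (f x0) (g x0)))).
  { exists x0. split; auto. rewrite rxx. apply pos_INR. }
  assert (Hm0 : forall x, 0 <= Rmin 1 (rho (f x) (g x))).
  { intros. apply Rmin_glb; [lra|apply rpos]. }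
  assert (U1 : is_ub_Rbar E 1).
  { intros r [x [_ ->]]. simpl. apply Rmin_l. }
  pose proof (Hlub _ U1) as L1. pose proof (Hub _ E0) as L0.
  destruct (Lub_Rbar E) as [l| |]; simpl in L0, L1; try contradiction.
  simpl. split; [|split].
  - pose proof (Hm0 x0). lra.
  - intros x Hx. apply (Hub (Rmin 1 (rho (f x) (g x)))). exists x; auto.
  - intros be Hbe Hb. assert (Ub : is_ub_Rbar E be).
    { intros r [x [Hx ->]]. simpl. apply Hb; auto. }
    apply (Hlub _ Ub).
Qed.

Lemma term_eq n : / 2 ^ (S n) = / 2 * (/ 2) ^ n.
Proof. rewrite <- pow_inv. simpl. ring. Qed.

Lemma half_split n : (/ 2) ^ n = (2/3) ^ n * (3/4) ^ n.
Proof. rewrite <- Rpow_mult_distr. f_equal. field. Qed.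

Lemma ex_terms f g : ex_series (fun n => / 2 ^ (S n) * Tm f g n).
Proof.
  apply (@ex_series_le R_AbsRing R_CompleteNormedModule) with (b := fun n => (3/4) ^ n).
  - intros n. change (norm (/ 2 ^ (S n) * Tm f g n)) with (Rabs (/ 2 ^ (S n) * Tm f g n)).
    destruct (Tm_props f g n) as [[T0 T1] _].
    rewrite term_eq, half_split.
    assert (0 <= (2/3)^n <= 1) by (split; [apply pow_le; lra| apply pow_le_1; lra]) .
    assert (0 <= (3/4)^n) by (apply pow_le; lra).
    rewrite Rabs_pos_eq by (apply Rmult_le_pos; [|lra]; apply Rmult_le_pos; [lra|nra]).
    set (p := (2/3)^n) in *. set (r := (3/4)^n) in *. set (T := Tm f g n) in *.
    assert (p * r <= r) by nra. assert (0 <= p * r) by nra.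
    assert (p * r * T <= p * r) by nra.
    replace (/ 2 * (p * r) * T) with (/ 2 * (p * r * T)) by ring. lra.
  - apply ex_series_geom. rewrite Rabs_pos_eq; lra.
Qed.

Lemma dist_lower f g n x : rho x x0 <= INR (S n) ->
  / 2 ^ (S n) * Rmin 1 (rho (f x) (g x)) <= dist_ub rho x0 f g.
Proof.
  intros Hx. change (dist_ub rho x0 f g) with (Series (fun n => / 2 ^ (S n) * Tm f g n)).
  set (a := fun n => / 2 ^ (S n) * Tm f g n).
  change (Series (fun n => / 2 ^ (S n) * Tm f g n)) with (Series a).
  assert (Ha : forall k, 0 <= a k).
  { intros k. unfold a. destruct (Tm_props f g k) as [[T0 _] _].
    apply Rmult_le_pos; auto. left. apply Rinv_0_lt_compat, pow_lt; lra. }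
  destruct (Tm_props f g n) as [_ [T1 _]].
  assert (Hn : / 2 ^ (S n) * Rmin 1 (rho (f x) (g x)) <= a n).
  { unfold a. apply Rmult_le_compat_l; [left; apply Rinv_0_lt_compat, pow_lt; lra|]. auto. }
  rewrite (Series_incr_n a (S n)) by (lia || apply ex_terms).
  simpl pred.
  assert (Hs : a n <= sum_f_R0 a n).
  { destruct n; simpl; [lra|]. pose proof (cond_pos_sum a n Ha). lra. }
  assert (Ht : 0 <= Series (fun k => a (S n + k)%nat)).
  { replace 0 with (Series (fun _ : nat => 0)).
    - apply Series_le. intros k; split; [lra|apply Ha].
      apply (ex_series_incr_n a (S n)). apply ex_terms.
    - rewrite (Series_ext (fun _ : nat => 0) (fun k : nat => 0 * 0)) by (intros; ring).
      rewrite Series_scal_l. ring. }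
  lra.
Qed.

Lemma dist_upper f g N be : 0 <= be ->
  (forall n, (n < N)%nat -> forall x, rho x x0 <= INR (S n) -> rho (f x) (g x) <= be) ->
  dist_ub rho x0 f g <= 4 * (be + (2/3) ^ N).
Proof.
  intros Hbe Hb. change (dist_ub rho x0 f g) with (Series (fun n => / 2 ^ (S n) * Tm f g n)).
  set (C := be + (2/3) ^ N).
  assert (HN : 0 <= (2/3)^N) by (apply pow_le; lra).
  eapply Rle_trans.
  - apply Series_le with (b := fun n => C * (3/4) ^ n).
    + intros n. destruct (Tm_props f g n) as [[T0 T1] [_ T3]].
      rewrite term_eq, half_split.
      assert (P1 : 0 <= (2/3)^n <= 1) by (split; [apply pow_le; lra| apply pow_le_1; lra]).
      assert (P2 : 0 <= (3/4)^n) by (apply pow_le; lra).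
      assert (P3 : (2/3)^n * (3/4)^n <= (3/4)^n) by nra.
      split. { apply Rmult_le_pos; [|lra]. apply Rmult_le_pos; [lra|nra]. }
      destruct (Nat.lt_ge_cases n N) as [Hn|Hn].
      * assert (Tm f g n <= be).
        { apply T3; auto. intros x Hx. eapply Rle_trans. apply Rmin_r. apply Hb with n; auto. }
        unfold C. set (p := (2/3)^n) in *. set (r := (3/4)^n) in *. set (T := Tm f g n) in *.
        set (pN := (2/3)^N) in *.
        assert (0 <= p * r) by nra. assert (p * r <= r) by nra. assert (p * r * T <= p * r * be) by nra.
        assert (p * r * be <= r * be) by nra. assert (0 <= pN * r) by nra.
        replace (/ 2 * (p * r) * T) with (/ 2 * (p * r * T)) by ring. nra.
      * assert ((2/3)^n <= (2/3)^N).
        { replace n with (N + (n - N))%nat by lia. rewrite pow_add.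
          assert (0 <= (2/3)^(n-N) <= 1) by (split; [apply pow_le; lra| apply pow_le_1; lra]).
          nra. }
        unfold C. set (p := (2/3)^n) in *. set (r := (3/4)^n) in *. set (T := Tm f g n) in *.
        set (pN := (2/3)^N) in *.
        assert (0 <= p * r) by nra. assert (p * r * T <= p * r) by nra. assert (p * r <= pN * r) by nra.
        assert (0 <= be * r) by nra.
        replace (/ 2 * (p * r) * T) with (/ 2 * (p * r * T)) by ring. nra.
    + exact (@ex_series_scal_l R_AbsRing R_NormedModule C _ (ex_series_geom (3/4) ltac:(rewrite Rabs_pos_eq; lra))).
  - rewrite Series_scal_l, Series_geom by (rewrite Rabs_pos_eq; lra).
    unfold C. lra.
Qed.

End Dist.

Lemma inC_modc f : in_Comega rho om f -> modc f.
Proof.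
  intros Hf x y. specialize (Hf (rho x y) (rpos _ _)). unfold modulus in Hf.
  set (E := fun r => exists x0 y0, rho x0 y0 <= rho x y /\ r = rho (f x0) (f y0)) in Hf.
  destruct (Lub_Rbar_correct E) as [Hub _].
  assert (HE : E (rho (f x) (f y))) by (exists x, y; split; auto; lra).
  pose proof (Rbar_le_trans _ _ _ (Hub _ HE) Hf). simpl in H. auto.
Qed.

Lemma modc_inC f : modc f -> in_Comega rho om f.
Proof.
  intros Hmg s Hs. unfold modulus.
  set (E := fun r => exists x y, rho x y <= s /\ r = rho (f x) (f y)).
  destruct (Lub_Rbar_correct E) as [_ Hlub]. apply Hlub.
  intros r [x [y [Hxy ->]]]. simpl. eapply Rle_trans; [apply Hmg|].
  apply om_mono; auto. apply rpos.
Qed.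

Lemma nat_floor y : 0 <= y -> exists n : nat, INR n <= y < INR n + 1.
Proof.
  intros Hy. destruct (nat_above y Hy) as [m [H1 H2]].
  destruct m as [|n]. { simpl in H1. lra. }
  exists n. rewrite S_INR in *. lra.
Qed.

Lemma small_den e : 0 < e -> exists b : nat, / INR (S b) < e.
Proof.
  intros He. destruct (nat_above (/ e)) as [m [H1 _]].
  { left. apply Rinv_0_lt_compat; auto. }
  exists m. rewrite S_INR. pose proof (pos_INR m).
  apply (Rmult_lt_reg_r (INR m + 1)); [lra|].
  rewrite Rinv_l by lra.
  apply (Rmult_lt_compat_l e) in H1; auto. rewrite Rinv_r in H1 by lra. nra.
Qed.

Lemma rat_below x e : 0 <= x -> 0 < e ->
  exists a b : nat, x - e < INR a / INR (S b) <= x.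
Proof.
  intros Hx He. destruct (small_den e He) as [b Hb].
  pose proof (pos_INR b). assert (HS : 0 < INR (S b)) by (rewrite S_INR; lra).
  destruct (nat_floor (x * INR (S b))) as [a [Ha1 Ha2]]. { nra. }
  exists a, b. split.
  - apply (Rmult_lt_reg_r (INR (S b))); auto.
    replace (INR a / INR (S b) * INR (S b)) with (INR a) by (field; lra).
    assert (e * INR (S b) > 1).
    { apply (Rmult_lt_compat_r (INR (S b))) in Hb; auto. rewrite Rinv_l in Hb; lra. }
    nra.
  - apply (Rmult_le_reg_r (INR (S b))); auto.
    replace (INR a / INR (S b) * INR (S b)) with (INR a) by (field; lra). lra.
Qed.

Lemma rat_above x e : 0 <= x -> 0 < e ->
  exists a b : nat, x <= INR a / INR (S b) < x + e.
Proof.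
  intros Hx He. destruct (small_den e He) as [b Hb].
  pose proof (pos_INR b). assert (HS : 0 < INR (S b)) by (rewrite S_INR; lra).
  destruct (nat_floor (x * INR (S b))) as [a [Ha1 Ha2]]. { nra. }
  exists (S a), b. rewrite S_INR. split.
  - apply (Rmult_le_reg_r (INR (S b))); auto.
    replace ((INR a + 1) / INR (S b) * INR (S b)) with (INR a + 1) by (field; lra). lra.
  - apply (Rmult_lt_reg_r (INR (S b))); auto.
    replace ((INR a + 1) / INR (S b) * INR (S b)) with (INR a + 1) by (field; lra).
    assert (e * INR (S b) > 1).
    { apply (Rmult_lt_compat_r (INR (S b))) in Hb; auto. rewrite Rinv_l in Hb; lra. }
    nra.
Qed.

Lemma rat_nn a b : 0 <= INR a / INR (S b).
Proof.
  apply Rdiv_le_0_compat. apply pos_INR. rewrite S_INR; pose proof (pos_INR b); lra.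
Qed.

Lemma rmin_lt u v : 0 <= u -> Rmin 1 u < Rmin 1 v -> u < v.
Proof. intros. unfold Rmin in *. repeat destruct Rle_dec; lra. Qed.

Lemma nowhere (unb : unbounded_metric rho) x0 q c : 0 <= q -> 0 <= c ->
  nowhere_denseC rho om x0
    (fun h => c < om q /\ in_Comega rho om h /\ forall x y, rho x y <= q -> rho (h x) (h y) <= c).
Proof.
  intros Hq Hc f [Hf [[_ Hcl] [r [Hr Hball]]]].
  destruct (Hcl r Hr) as [g0 [[Hcq _] _]].
  destruct (pow_lt_1_zero (2/3) ltac:(rewrite Rabs_pos_eq; lra) (r/8) ltac:(lra)) as [N HN].
  specialize (HN N (le_n N)). rewrite Rabs_pos_eq in HN by (apply pow_le; lra).
  destruct (density unb f x0 (inC_modc f Hf) q c (INR N) (r/8) Hq Hc Hcq (pos_INR N) ltac:(lra))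
    as [g [Hgm [Hclose [z [y [Hzy Hgzy]]]]]].
  assert (Hd : dist_ub rho x0 f g < r).
  { eapply Rle_lt_trans. apply (dist_upper x0 f g N (r/8)); [lra|].
    intros n Hn x Hx. apply Hclose. eapply Rle_trans; [apply Hx|]. apply le_INR. lia.
    lra. }
  destruct (Hball g (modc_inC g Hgm) Hd) as [_ Hcl2].
  set (eta := rho (g z) (g y) - c).
  destruct (nat_above (rho z x0 + rho y x0)) as [n [Hn1 _]].
  { pose proof (rpos z x0); pose proof (rpos y x0); lra. }
  assert (Hzn : rho z x0 <= INR (S n)) by (rewrite S_INR; pose proof (rpos y x0); lra).
  assert (Hyn : rho y x0 <= INR (S n)) by (rewrite S_INR; pose proof (rpos z x0); lra).
  assert (Hp : 0 < / 2 ^ (S n)) by (apply Rinv_0_lt_compat, pow_lt; lra).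
  assert (Hmin : 0 < Rmin 1 (eta / 2)) by (apply Rmin_glb_lt; unfold eta; lra).
  destruct (Hcl2 (/ 2 ^ (S n) * Rmin 1 (eta / 2)) ltac:(nra)) as [h [[_ [_ Hh1]] [_ Hdh]]].
  assert (Cz : rho (g z) (h z) < eta / 2).
  { apply rmin_lt; [apply rpos|]. apply (Rmult_lt_reg_l (/ 2 ^ (S n))); auto.
    eapply Rle_lt_trans; [apply (dist_lower x0 g h n z Hzn)|]. auto. }
  assert (Cy : rho (g y) (h y) < eta / 2).
  { apply rmin_lt; [apply rpos|]. apply (Rmult_lt_reg_l (/ 2 ^ (S n))); auto.
    eapply Rle_lt_trans; [apply (dist_lower x0 g h n y Hyn)|]. auto. }
  pose proof (Hh1 z y Hzy).
  pose proof (rtri (g z) (h z) (g y)). pose proof (rtri (h z) (h y) (g y)).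
  rewrite (rsym (h y) (g y)) in H1. unfold eta in *. lra.
Qed.

Definition qn n := INR (fst (Cantor.of_nat (fst (Cantor.of_nat n)))) /
                   INR (S (snd (Cantor.of_nat (fst (Cantor.of_nat n))))).
Definition cn n := INR (fst (Cantor.of_nat (snd (Cantor.of_nat n)))) /
                   INR (S (snd (Cantor.of_nat (snd (Cantor.of_nat n))))).

Lemma main (unb : unbounded_metric rho) (x0 : X) :
  exists M : (X -> X) -> Prop,
    meagreC rho om x0 M /\
    forall f, in_Comega rho om f -> ~ M f ->
      forall s, 0 <= s -> modulus rho f s = Finite (om s).
Proof.
  exists (fun f => in_Comega rho om f /\ exists s, 0 <= s /\ modulus rho f s <> Finite (om s)).
  split.
  - split. { intros f [H _]; auto. }
    exists (fun n h => cn n < om (qn n) /\ in_Comega rho om h /\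
              forall x y, rho x y <= qn n -> rho (h x) (h y) <= cn n).
    split.
    + intros n. apply nowhere; auto; apply rat_nn.
    + intros f [Hf [s [Hs Hne]]].
      pose proof (Hf s Hs) as Hle.
      unfold modulus in Hle, Hne.
      set (E := fun r => exists x y, rho x y <= s /\ r = rho (f x) (f y)) in Hle, Hne.
      destruct (Lub_Rbar_correct E) as [Hub _].
      assert (E0 : E 0) by (exists x0, x0; rewrite !rxx; split; auto).
      pose proof (Hub 0 E0) as H0.
      destruct (Lub_Rbar E) as [m| |]; simpl in Hle, H0; try contradiction.
      assert (Hmlt : m < om s).
      { destruct Hle as [H|H]; auto. subst. contradiction. }
      assert (Hs0 : 0 < s).
      { destruct Hs as [H|H]; auto. subst. rewrite om0 in Hmlt. lra. }
      set (gap := om s - m).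
      destruct Ho as [_ [_ [Hcont _]]].
      destruct (Hcont s Hs (gap/2) ltac:(unfold gap; lra)) as [d [Hd Hds]].
      destruct (rat_below s d Hs Hd) as [a [b [Hab1 Hab2]]].
      set (q := INR a / INR (S b)) in *.
      assert (Hq : om s - gap/2 < om q).
      { assert (Rabs (q - s) < d).
        { rewrite Rabs_left1 by lra. lra. }
        specialize (Hds q (rat_nn a b) H). apply Rabs_def2 in H. 
        pose proof (Rabs_def2 _ _ Hds). lra. }
      destruct (rat_above m (gap/2) H0 ltac:(unfold gap; lra)) as [a' [b' [Hc1 Hc2]]].
      set (c := INR a' / INR (S b')) in *.
      exists (Cantor.to_nat (Cantor.to_nat (a, b), Cantor.to_nat (a', b'))).
      unfold qn, cn. rewrite Cantor.cancel_of_to. cbn [fst snd]. rewrite !Cantor.cancel_of_to. cbn [fst snd]. fold q c.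
      split; [unfold gap in *; lra|]. split; auto.
      intros x y Hxy. assert (HE : E (rho (f x) (f y))) by (exists x, y; split; [lra|auto]).
      pose proof (Hub _ HE). simpl in H. lra.
  - intros f Hf HnM s Hs. apply NNPP. intros Hne. apply HnM. split; auto. exists s; auto.
Qed.

End Geo.

Theorem theorem3p3 (X : Type) (rho : X -> X -> R) (G : X -> X -> R -> X)
    (om : R -> R) (x0 : X) :
  is_metric rho -> complete_metric rho -> unbounded_metric rho ->
  coherent_geodesics rho G -> hyperbolic rho G ->
  admissible_modulus om ->
  exists M : (X -> X) -> Prop,
    meagreC rho om x0 M /\
    forall f, in_Comega rho om f -> ~ M f ->
      forall s, 0 <= s -> modulus rho f s = Finite (om s).
Proof.
  intros Hm _ Hu Hg Hh Ho.
  exact (main rho G Hm Hg Hh om Ho Hu x0).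
Qed.
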